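(* Let $k$ be an algebraically closed field of arbitrary characteristic and let $\mathcal{C}\subset\mathbb{P}^3$ be a quadric cone with vertex $v$. Fix an integer $d\ge 2$ and a point $q\in\mathcal{C}\setminus\{v\}$, and let $R_q\subset\mathcal{C}$ be the line spanned by $v$ and $q$. Then there is a smooth divisor $Y\in|\mathcal{O}_{\mathcal{C}}(d)|$ such that $v\notin Y$, $q\notin Y$, and $R_q$ meets $Y$ at a unique point.
   Context: $\mathcal{O}_{\mathcal{C}}(d)$ is the restriction of $\mathcal{O}_{\mathbb{P}^3}(d)$ to $\mathcal{C}$. *)

(* Defs.v *)
From HB Require Import structures.
From mathcomp Require Import all_boot all_order all_algebra.
From mathcomp Require Import mpoly.
Set Implicit Arguments. Unset Strict Implicit. Unset Printing Implicit Defensive.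
Import GRing.Theory.
Local Open Scope ring_scope.

(* Projective 3-space P^3 over a field k: points are represented by nonzero
   vectors x : 'I_4 -> k (homogeneous coordinates), up to nonzero scalars. *)

Section Proj.
Variable k : fieldType.

Definition vnonzero (x : 'I_4 -> k) : Prop := exists i, x i != 0.

Definition proj_eq (x y : 'I_4 -> k) : Prop := exists c : k, c != 0 /\ forall i, x i = c * y i.

Definition grad (p : {mpoly k[4]}) (x : 'I_4 -> k) : 'I_4 -> k :=
  fun i => (mderiv i p).@[x].

Definition on_hyp (p : {mpoly k[4]}) (x : 'I_4 -> k) : Prop :=
  vnonzero x /\ p.@[x] = 0.

Definition quadric_cone (Q : {mpoly k[4]}) (v : 'I_4 -> k) : Prop :=
  Q \is 2.-homog /\ vnonzero v /\
  forall x, vnonzero x ->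
    ((Q.@[x] = 0 /\ forall i, grad Q x i = 0) <-> proj_eq x v).

Definition lin_indep2 (a b : 'I_4 -> k) : Prop :=
  forall s t : k, (forall i, s * a i + t * b i = 0) -> s = 0 /\ t = 0.

(* The curve Y = C \cap V(F) (a divisor in |O_C(d)| when F has degree d) is
   smooth: Jacobian criterion for the complete intersection V(Q, F) -- at every
   point of Y the gradients of Q and F are linearly independent. *)
Definition smooth_section (Q F : {mpoly k[4]}) : Prop :=
  forall x, vnonzero x -> Q.@[x] = 0 -> F.@[x] = 0 ->
    lin_indep2 (grad Q x) (grad F x).

Definition on_line (v q x : 'I_4 -> k) : Prop :=
  vnonzero x /\ exists a b : k, forall i, x i = a * v i + b * q i.

End Proj.

(* Main.v *)
Require Import Defs.
From HB Require Import structures.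
From mathcomp Require Import all_boot all_order all_algebra.
From mathcomp Require Import mpoly.
From mathcomp Require Import ring.
From Stdlib Require Import Classical.
Set Implicit Arguments. Unset Strict Implicit. Unset Printing Implicit Defensive.
Import GRing.Theory.
Local Open Scope ring_scope.

Section Rep.
Variable k : fieldType.

Lemma mdeg2P (m : 'X_{1..4}) : mdeg m = 2%N -> exists i j, m = (U_(i) + U_(j))%MM.
Proof.
move=> hm.
have : m != 0%MM by rewrite -mdeg_eq0 hm.
move=> /eqP hm0.
have [i hi] : exists i, m i != 0%N.
  case: (boolP [exists i, m i != 0%N]) => [/existsP //|/existsPn H].
  by exfalso; apply: hm0; apply/mnmP => i; rewrite mnm0E; move/negPn: (H i) => /eqP.
have hle : (U_(i) <= m)%MM by rewrite lep1mP.
have hd : mdeg (m - U_(i))%MM = 1%N.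
  by move: hm; rewrite -{1}(submK hle) mdegD mdeg1 addn1 => -[].
have /mdeg1P [j /eqP hj] : mdeg (m - U_(i))%MM == 1%N by rewrite hd.
exists i, j; by rewrite -{1}(submK hle) hj addmC.
Qed.

Definition quadp (A : 'M[k]_4) : {mpoly k[4]} :=
  \sum_(i < 4) \sum_(j < 4) A i j *: ('X_i * 'X_j).

Lemma quadpD A B : quadp (A + B) = quadp A + quadp B.
Proof.
rewrite /quadp -big_split /=; apply: eq_bigr => a _.
rewrite -big_split /=; apply: eq_bigr => b _; by rewrite mxE scalerDl.
Qed.

Lemma quadp_delta c i j : quadp (c *: delta_mx i j) = c *: ('X_i * 'X_j).
Proof.
rewrite /quadp (bigD1 i) //= [X in _ + X]big1 ?addr0; last first.
  move=> a ha; apply: big1 => b _; by rewrite !mxE (negbTE ha) mulr0 scale0r.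
rewrite (bigD1 j) //= [X in _ + X]big1 ?addr0; last first.
  move=> b hb; by rewrite !mxE eqxx (negbTE hb) mulr0 scale0r.
by rewrite !mxE !eqxx mulr1.
Qed.

Lemma rep2 (p : {mpoly k[4]}) : p \is 2.-homog -> exists A, p = quadp A.
Proof.
elim/mpolyind: p => [|c m p mnotin cnz IH] hom.
  by exists 0; rewrite /quadp; apply/esym/big1 => i _; apply/big1 => j _; rewrite mxE scale0r.
have hmd : {in msupp (c *: 'X_[m] + p), forall m', mdeg m' = 2%N} by apply/dhomogP.
have hm : mdeg m = 2%N.
  apply: hmd; rewrite mcoeff_msupp mcoeffD mcoeffZ mcoeffX eqxx mulr1.
  by move: mnotin; rewrite mcoeff_msupp negbK => /eqP ->; rewrite addr0.
have hp : p \is 2.-homog.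
  apply/dhomogP => m' hm'; apply: hmd.
  rewrite mcoeff_msupp mcoeffD mcoeffZ mcoeffX.
  have -> : (m == m') = false.
    by apply/negbTE; apply: contraNneq mnotin => ->.
  by rewrite mulr0 add0r -mcoeff_msupp.
have [A ->] := IH hp.
have [i [j ->]] := mdeg2P hm.
exists (A + c *: delta_mx i j).
rewrite quadpD quadp_delta mpolyXD addrC //.
Qed.


Lemma mderivXU (i l : 'I_4) : mderiv l ('X_i : {mpoly k[4]}) = ((i == l)%:R)%:MP.
Proof.
rewrite mderivX mnm1E; case: eqP => [->|_].
  have -> : (U_(l) - U_(l))%MM = 0%MM by apply/mnmP => j; rewrite mnmBE subnn mnm0E.
  by rewrite mpolyX0 scale1r.
by rewrite scale0r.
Qed.

Lemma meval_sum (v : 'I_4 -> k) (I : Type) (r : seq I) (P : pred I) (F : I -> {mpoly k[4]}) :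
  (\sum_(i <- r | P i) F i).@[v] = \sum_(i <- r | P i) (F i).@[v].
Proof. exact: raddf_sum. Qed.

Lemma mderiv_sum (l : 'I_4) (I : Type) (r : seq I) (P : pred I) (F : I -> {mpoly k[4]}) :
  mderiv l (\sum_(i <- r | P i) F i) = \sum_(i <- r | P i) mderiv l (F i).
Proof. exact: raddf_sum. Qed.

Definition ev (p : {mpoly k[4]}) (r : 'rV[k]_4) := p.@[fun i => r 0 i].

Lemma ev_quadp A r : ev (quadp A) r = (r *m A *m r^T) 0 0.
Proof.
rewrite /ev /quadp meval_sum mxE.
rewrite (eq_bigr (fun i => \sum_(j < 4) A i j * (r 0 i * r 0 j))); last first.
  by move=> i _; rewrite meval_sum; apply: eq_bigr => j _; rewrite mevalZ mevalM !mevalXU.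
rewrite exchange_big; apply: eq_bigr => j _; rewrite !mxE mulr_suml; apply: eq_bigr => i _.
by ring.
Qed.

Lemma ev_dquadp A r l : ev (mderiv l (quadp A)) r = ((A + A^T) *m r^T) l 0.
Proof.
rewrite /ev /quadp mderiv_sum meval_sum mxE.
rewrite (eq_bigr (fun i => \sum_(j < 4) A i j * ((i == l)%:R * r 0 j + r 0 i * (j == l)%:R))); last first.
  move=> i _; rewrite mderiv_sum meval_sum; apply: eq_bigr => j _.
  by rewrite mderivZ mderivM !mderivXU mevalZ mevalD !mevalM !mevalXU !mevalC.
rewrite (eq_bigr (fun i => \sum_(j < 4) A i j * ((i == l)%:R * r 0 j) + \sum_(j < 4) A i j * (r 0 i * (j == l)%:R))); last first.
  by move=> i _; rewrite -big_split /=; apply: eq_bigr => j _; rewrite mulrDr.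
rewrite big_split /=.
have E1 : \sum_(i < 4) \sum_(j < 4) A i j * ((i == l)%:R * r 0 j) = \sum_(j < 4) A l j * r 0 j.
  rewrite (bigD1 l) //= [X in _ + X]big1 ?addr0; last first.
    by move=> i hi; apply: big1 => j _; rewrite (negbTE hi) mul0r mulr0.
  by apply: eq_bigr => j _; rewrite eqxx mul1r.
have E2 : \sum_(i < 4) \sum_(j < 4) A i j * (r 0 i * (j == l)%:R) = \sum_(i < 4) A i l * r 0 i.
  apply: eq_bigr => i _; rewrite (bigD1 l) //= [X in _ + X]big1 ?addr0; last first.
    by move=> j hj; rewrite (negbTE hj) mulr0 mulr0.
  by rewrite eqxx mulr1 mulrC.
rewrite E1 E2 -big_split /=; apply: eq_bigr => j _; rewrite !mxE; ring.
Qed.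


Lemma trD (r s : 'rV[k]_4) : (r + s)^T = r^T + s^T.
Proof. exact: linearD. Qed.
Lemma trZ a (r : 'rV[k]_4) : (a *: r)^T = a *: r^T.
Proof. exact: linearZ. Qed.

Section QF.
Variable A : 'M[k]_4.
Definition qm (r : 'rV[k]_4) := (r *m A *m r^T) 0 0.
Definition bm (r s : 'rV[k]_4) := (s *m (A + A^T) *m r^T) 0 0.

Lemma tr11 (s r : 'rV[k]_4) (B : 'M[k]_4) : (s *m B *m r^T) 0 0 = (r *m B^T *m s^T) 0 0.
Proof.
have -> : r *m B^T *m s^T = (s *m B *m r^T)^T by rewrite !trmx_mul trmxK mulmxA.
by rewrite [in RHS]mxE.
Qed.

Lemma bmC r s : bm r s = bm s r.
Proof. by rewrite /bm tr11 linearD /= trmxK addrC. Qed.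

Lemma bmE r s : bm r s = (s *m A *m r^T) 0 0 + (r *m A *m s^T) 0 0.
Proof. by rewrite /bm mulmxDr mulmxDl mxE [X in _ + X]tr11 trmxK. Qed.

Lemma qmD r s : qm (r + s) = qm r + qm s + bm r s.
Proof.
rewrite bmE /qm trD !mulmxDl !mulmxDr !mxE.
ring.
Qed.

Lemma qmZ a r : qm (a *: r) = a ^+ 2 * qm r.
Proof.
rewrite /qm trZ -!scalemxAl -scalemxAr !mxE; ring.
Qed.

Lemma bmDl r1 r2 s : bm (r1 + r2) s = bm r1 s + bm r2 s.
Proof. by rewrite /bm trD mulmxDr mxE. Qed.

Lemma bmZl a r s : bm (a *: r) s = a * bm r s.
Proof. by rewrite /bm trZ -scalemxAr mxE. Qed.

Lemma bmDr r s1 s2 : bm r (s1 + s2) = bm r s1 + bm r s2.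
Proof. by rewrite bmC bmDl !(bmC r). Qed.

Lemma bmZr a r s : bm r (a *: s) = a * bm r s.
Proof. by rewrite bmC bmZl (bmC r). Qed.

Lemma bm_diag r : bm r r = 2%:R * qm r.
Proof. rewrite bmE /qm; ring. Qed.

Lemma bm0l s : bm 0 s = 0.
Proof. by rewrite /bm trmx0 mulmx0 mxE. Qed.

End QF.
End Rep.

Section Core.
Variable k : fieldType.

Definition Phi (c1 c2 c3 : k) (n : nat) (y0 y1 y2 y3 : k) :=
  y3 ^+ n.+2 + y2 * y0 ^+ n.+1 + c1 * (y2 * y3 ^+ n.+1) + c2 * (y1 * y0 ^+ n.+1) + c3 * y1 ^+ n.+2.
Definition P0 (c1 c2 c3 : k) (n : nat) (y0 y1 y2 y3 : k) :=
  n.+1%:R * (y2 * y0 ^+ n) + c2 * (n.+1%:R * (y1 * y0 ^+ n)).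
Definition P1 (c1 c2 c3 : k) (n : nat) (y0 y1 y2 y3 : k) :=
  c2 * y0 ^+ n.+1 + c3 * (n.+2%:R * y1 ^+ n.+1).
Definition P2 (c1 c2 c3 : k) (n : nat) (y0 y1 y2 y3 : k) :=
  y0 ^+ n.+1 + c1 * y3 ^+ n.+1.
Definition P3 (c1 c2 c3 : k) (n : nat) (y0 y1 y2 y3 : k) :=
  n.+2%:R * y3 ^+ n.+1 + c1 * (n.+1%:R * (y2 * y3 ^+ n)).

Definition core_concl (c1 c2 c3 : k) (n : nat) := forall y0 y1 y2 y3 s t : k,
  ~ (y0 = 0 /\ y1 = 0 /\ y2 = 0 /\ y3 = 0) ->
  y0 * y1 + y2 ^+ 2 = 0 -> Phi c1 c2 c3 n y0 y1 y2 y3 = 0 ->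
  s * y1 + t * P0 c1 c2 c3 n y0 y1 y2 y3 = 0 -> s * y0 + t * P1 c1 c2 c3 n y0 y1 y2 y3 = 0 ->
  s * (2%:R * y2) + t * P2 c1 c2 c3 n y0 y1 y2 y3 = 0 -> s * 0 + t * P3 c1 c2 c3 n y0 y1 y2 y3 = 0 ->
  s = 0 /\ t = 0.

Lemma z0 m : (0 : k) ^+ m.+1 = 0.
Proof. by rewrite exprS mul0r. Qed.

Ltac simp := rewrite ?(mul0r, mulr0, add0r, addr0, mul1r, mulr1, z0, expr0) //.

Lemma sq0 (x : k) : x ^+ 2 = 0 -> x = 0.
Proof. by move/eqP; rewrite expf_eq0 /= => /eqP. Qed.
Lemma pw0 (x : k) m : x ^+ m.+1 = 0 -> x = 0.
Proof. by move/eqP; rewrite expf_eq0 /= => /eqP. Qed.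
Lemma pwn0 (x : k) m : x != 0 -> x ^+ m != 0.
Proof. by move=> h; rewrite expf_neq0. Qed.
Lemma mul0_l (a b : k) : a * b = 0 -> b != 0 -> a = 0.
Proof. by move/eqP; rewrite mulf_eq0 => /orP [/eqP //|/eqP -> /eqP]. Qed.
Lemma mul0_r (a b : k) : a * b = 0 -> a != 0 -> b = 0.
Proof. by move/eqP; rewrite mulf_eq0 => /orP [/eqP -> /eqP|/eqP //]. Qed.

Lemma core_t0 c1 c2 c3 n y0 y1 y2 y3 s :
  ~ (y0 = 0 /\ y1 = 0 /\ y2 = 0 /\ y3 = 0) ->
  y0 * y1 + y2 ^+ 2 = 0 -> Phi c1 c2 c3 n y0 y1 y2 y3 = 0 ->
  s * y1 = 0 -> s * y0 = 0 -> s = 0.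
Proof.
move=> nz hc hP h1 h0; apply/eqP; apply/negP => /negP hs.
have e0 : y0 = 0 by apply: mul0_r h0 hs.
have e1 : y1 = 0 by apply: mul0_r h1 hs.
have e2 : y2 = 0 by apply: sq0; move: hc; rewrite e0 mul0r add0r.
have e3 : y3 = 0.
  apply: (@pw0 _ n.+1); move: hP; rewrite /Phi e0 e1 e2 /=; simp.
by apply: nz.
Qed.

Lemma natSS n : (n.+2%:R : k) = n.+1%:R + 1.
Proof. by rewrite -natr1. Qed.

Lemma coreI n : (n.+2%:R : k) = 0 -> core_concl 1 0 1 n.
Proof.
move=> hd y0 y1 y2 y3 s t nz hc hP h0 h1 h2 h3.
have hn1 : (n.+1%:R : k) = -1 by apply/eqP; rewrite -subr_eq0 opprK -natSS hd.
case: (eqVneq t 0) => [t0|tn0].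
  split=> //; apply: (core_t0 nz hc hP); move: h0 h1; rewrite t0 !mul0r !addr0 //.
exfalso.
have hP3 : y2 * y3 ^+ n = 0.
  move: h3; rewrite mulr0 add0r /P3 hd hn1 mul0r add0r mul1r => /(mul0_r) /(_ tn0).
  by move/eqP; rewrite mulN1r oppr_eq0 => /eqP.
have hs : s * y0 = 0 by move: h1; rewrite /P1 hd; simp.
case: (eqVneq y0 0) => [e0|y0n].
  have e2 : y2 = 0 by apply: sq0; move: hc; rewrite e0 mul0r add0r.
  have e3 : y3 = 0.
    apply: (@pw0 _ n); move: h2; rewrite e2 /P2 e0; simp.
    by move/mul0_r => /(_ tn0).
  apply: nz; do !split => //.
  apply: (@pw0 _ n.+1); move: hP; rewrite /Phi e0 e2 e3 /=; simp.
have s0 : s = 0 by apply: mul0_l hs y0n.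
have hP2 : y0 ^+ n.+1 + y3 ^+ n.+1 = 0.
  by move: h2; rewrite s0 mul0r add0r /P2 mul1r => /mul0_r /(_ tn0).
have y3n : y3 != 0.
  apply/eqP => e3; move: hP2; rewrite e3; simp => /pw0 /eqP; by rewrite (negbTE y0n).
have e2 : y2 = 0 by apply: mul0_l hP3 (pwn0 _ y3n).
have e1 : y1 = 0 by apply: mul0_r y0n; move: hc; rewrite e2; simp.
move: hP; rewrite /Phi e1 e2 ; simp => /pw0 /eqP.
by rewrite (negbTE y3n).
Qed.


Definition Bad (n : nat) (kap : k) := exists tau : k,
  tau - tau ^+ 2 + kap * (- tau ^+ 2) ^+ n.+2 = 0 /\
  1 = 2%:R * tau * (1 + kap * (n.+2%:R * (- tau ^+ 2) ^+ n.+1)).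

Lemma coreII n kap : (n.+2%:R : k) != 0 -> kap != 0 -> ~ Bad n kap -> core_concl 0 1 kap n.
Proof.
move=> hd hk hbad y0 y1 y2 y3 s t nz hc hP h0 h1 h2 h3.
case: (eqVneq t 0) => [t0|tn0].
  split=> //; apply: (core_t0 nz hc hP); move: h0 h1; rewrite t0 !mul0r !addr0 //.
exfalso.
have e3 : y3 = 0.
  move: h3; rewrite /P3; simp => /mul0_r /(_ tn0) /mul0_r /(_ hd).
  exact: pw0.
case: (eqVneq y0 0) => [e0|y0n].
  have e2 : y2 = 0 by apply: sq0; move: hc; rewrite e0 mul0r add0r.
  apply: nz; do !split => //.
  apply: (@pw0 _ n.+1); apply: (mul0_r _ hk).
  by move: hP; rewrite /Phi e0 e2 e3 /=; simp.
have [tau hy2] : exists tau, y2 = tau * y0 by exists (y2 / y0); rewrite divfK.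
have hy1 : y1 = - tau ^+ 2 * y0.
  apply/eqP; rewrite -subr_eq0; apply/eqP; apply: (mul0_r (a := y0)) => //.
  by move: hc; rewrite hy2 => <-; ring.
have hel : t * (2%:R * y2 * P1 0 1 kap n y0 y1 y2 y3 - y0 * P2 0 1 kap n y0 y1 y2 y3) = 0.
  have -> : t * (2%:R * y2 * P1 0 1 kap n y0 y1 y2 y3 - y0 * P2 0 1 kap n y0 y1 y2 y3)
    = (2%:R * y2) * (s * y0 + t * P1 0 1 kap n y0 y1 y2 y3)
      - y0 * (s * (2%:R * y2) + t * P2 0 1 kap n y0 y1 y2 y3) by ring.
  by rewrite h1 h2; ring.
move/mul0_r: hel => /(_ tn0) /eqP; rewrite subr_eq0 => /eqP hel.
apply: hbad; exists tau.
have Yn : y0 ^+ n.+1 != 0 by apply: pwn0.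
have hy1n : y1 ^+ n.+1 = (- tau ^+ 2) ^+ n.+1 * y0 ^+ n.+1 by rewrite hy1 exprMn.
have hy1nn : y1 ^+ n.+2 = (- tau ^+ 2) ^+ n.+2 * (y0 ^+ n.+1 * y0) by rewrite hy1 exprMn [y0 ^+ n.+2]exprSr.
split.
  apply: (mul0_l (b := y0 * y0 ^+ n.+1)); last by rewrite mulf_neq0.
  move: hP; rewrite /Phi e3 hy1nn; simp.
  rewrite hy2 hy1 => <-; ring.
move: hel; rewrite /P1 /P2 hy1n e3 hy2; simp => /eqP; rewrite eq_sym -subr_eq0 => /eqP hel.
apply/eqP; rewrite -subr_eq0; apply/eqP.
apply: (mul0_l (b := y0 * y0 ^+ n.+1)); last by rewrite mulf_neq0.
rewrite -hel; ring.
Qed.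

Lemma bad_eq n (kap tau : k) :
  tau - tau ^+ 2 + kap * (- tau ^+ 2) ^+ n.+2 = 0 ->
  1 = 2%:R * tau * (1 + kap * (n.+2%:R * (- tau ^+ 2) ^+ n.+1)) ->
  [/\ tau != 0, kap * (- tau ^+ 2) ^+ n.+1 * tau = 1 - tau &
      2%:R * n.+1%:R * tau = 2%:R * n.+1%:R + 1].
Proof.
move=> E1 E2.
have tn : tau != 0 by apply/eqP => t0; move: E2; rewrite t0 !mulr0 mul0r => /eqP; rewrite oner_eq0.
set T := (- tau ^+ 2) ^+ n.+1.
have hT : kap * T * tau = 1 - tau.
  apply/eqP; rewrite eq_sym -subr_eq0; apply/eqP; apply: (mul0_r (a := tau)) => //.
  by move: E1; rewrite [(- tau ^+ 2) ^+ n.+2]exprSr -/T => <-; ring.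
split => //.
move: E2; rewrite (natSS n) -/T.
have -> : 2%:R * tau * (1 + kap * ((n.+1%:R + 1) * T)) = 2%:R * tau + 2%:R * (n.+1%:R + 1) * (kap * T * tau) by ring.
rewrite hT => E2; apply/eqP; rewrite -subr_eq0; apply/eqP.
transitivity (1 - (2%:R * tau + 2%:R * (n.+1%:R + 1) * (1 - tau))); first by ring.
by rewrite -E2 subrr.
Qed.

Lemma notbad n : ~ (Bad n 1 /\ Bad n (-1)).
Proof.
move=> [[t1 [E11 E12]] [t2 [E21 E22]]].
have [t1n h1 a1] := bad_eq E11 E12.
have [t2n h2 a2] := bad_eq E21 E22.
set a := 2%:R * n.+1%:R in a1 a2.
have an : a != 0.
  apply/eqP => a0; move: a1; rewrite a0 mul0r add0r => /eqP; by rewrite eq_sym oner_eq0.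
have e : t1 = t2 by apply: (mulfI an); rewrite a1 a2.
subst t2.
have two : (2%:R : k) != 0 by apply: contraNneq an => h; rewrite /a h mul0r.
have : 2%:R * ((- t1 ^+ 2) ^+ n.+1 * t1) = 0.
  have -> : 2%:R * ((- t1 ^+ 2) ^+ n.+1 * t1) = 1 * (- t1 ^+ 2) ^+ n.+1 * t1 - (-1) * (- t1 ^+ 2) ^+ n.+1 * t1 by ring.
  by rewrite h1 h2 subrr.
move/mul0_r => /(_ two) /mul0_l /(_ t1n) /pw0 /eqP.
rewrite oppr_eq0 expf_eq0 /= (negbTE t1n) //.
Qed.
End Core.

Definition i0 : 'I_4 := @Ordinal 4 0 isT.
Definition i1 : 'I_4 := @Ordinal 4 1 isT.
Definition i2 : 'I_4 := @Ordinal 4 2 isT.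
Definition i3 : 'I_4 := @Ordinal 4 3 isT.

Lemma sum4 (V : nmodType) (F : 'I_4 -> V) : \sum_(i < 4) F i = F i0 + F i1 + F i2 + F i3.
Proof.
rewrite !big_ord_recl big_ord0 addr0 !addrA.
by congr (_ + _ + _ + _); congr F; apply: val_inj.
Qed.

Lemma ord4P (P : 'I_4 -> Prop) : P i0 -> P i1 -> P i2 -> P i3 -> forall i, P i.
Proof.
move=> h0 h1 h2 h3 [[|[|[|[|m]]]] hm].
- by have -> : Ordinal hm = i0 by apply: val_inj.
- by have -> : Ordinal hm = i1 by apply: val_inj.
- by have -> : Ordinal hm = i2 by apply: val_inj.
- by have -> : Ordinal hm = i3 by apply: val_inj.
- by [].
Qed.

Local Opaque mpoly_mul mpoly_scale mpoly_add GRing.exp.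
Section Poly.
Variable k : fieldType.
Variable N : 'M[k]_4.
Variables (c1 c2 c3 : k) (n : nat).

Definition lf (j : 'I_4) : {mpoly k[4]} := \sum_(i < 4) N i j *: 'X_i.

Lemma ev_lf (X : 'rV[k]_4) j : ev (lf j) X = (X *m N) 0 j.
Proof.
rewrite /ev /lf meval_sum mxE; apply: eq_bigr => i _.
by rewrite mevalZ mevalXU mulrC.
Qed.

Lemma d_lf l j : mderiv l (lf j) = (N l j)%:MP.
Proof.
rewrite /lf mderiv_sum (bigD1 l) //= big1 ?addr0; last first.
  by move=> i hi; rewrite mderivZ mderivXU (negbTE hi) scaler0.
by rewrite mderivZ mderivXU eqxx -mul_mpolyC -mpolyCM mulr1.
Qed.

Lemma lf_homog j : lf j \is 1.-homog.
Proof.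
rewrite /lf; apply: rpred_sum => i _; apply: rpredZ.
by rewrite dhomogX; apply/mdeg1P; exists i.
Qed.

Lemma ev_d_mul l (p q : {mpoly k[4]}) (X : 'rV[k]_4) : ev (mderiv l (p * q)) X = ev (mderiv l p) X * ev q X + ev p X * ev (mderiv l q) X.
Proof. by rewrite /ev mderivM mevalD !mevalM. Qed.

Lemma evD (p q : {mpoly k[4]}) (X : 'rV[k]_4) : ev (p + q) X = ev p X + ev q X.
Proof. exact: mevalD. Qed.
Lemma evM (p q : {mpoly k[4]}) (X : 'rV[k]_4) : ev (p * q) X = ev p X * ev q X.
Proof. exact: mevalM. Qed.
Lemma evZ c (p : {mpoly k[4]}) (X : 'rV[k]_4) : ev (c *: p) X = c * ev p X.
Proof. exact: mevalZ. Qed.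

Lemma ev_pow (p : {mpoly k[4]}) m (X : 'rV[k]_4) : ev (p ^+ m) X = ev p X ^+ m.
Proof. by rewrite /ev rmorphXn. Qed.

Lemma ev_d_pow l (p : {mpoly k[4]}) m (X : 'rV[k]_4) : ev (mderiv l (p ^+ m.+1)) X = m.+1%:R * ev p X ^+ m * ev (mderiv l p) X.
Proof.
elim: m => [|m IH]; first by rewrite expr1 expr0 mulr1 mul1r.
rewrite exprS ev_d_mul IH ev_pow.
rewrite exprS; ring.
Qed.

Lemma ev_lfd l j (X : 'rV[k]_4) : ev (mderiv l (lf j)) X = N l j.
Proof. by rewrite d_lf /ev mevalC. Qed.

Definition Fp : {mpoly k[4]} :=
  lf i3 ^+ n.+2 + lf i2 * lf i0 ^+ n.+1 + c1 *: (lf i2 * lf i3 ^+ n.+1)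
  + c2 *: (lf i1 * lf i0 ^+ n.+1) + c3 *: lf i1 ^+ n.+2.

Lemma Fp_homog : Fp \is n.+2.-homog.
Proof.
have h : forall j m, lf j ^+ m \is m.-homog.
  by move=> j m; have := dhomogMn m (lf_homog j); rewrite mul1n.
have h2 : forall j j', lf j * lf j' ^+ n.+1 \is n.+2.-homog.
  by move=> j j'; have := dhomogM (lf_homog j) (h j' n.+1); rewrite add1n.
exact: (rpredD (rpredD (rpredD (rpredD (h i3 n.+2) (h2 i2 i0)) (rpredZ c1 (h2 i2 i3))) (rpredZ c2 (h2 i1 i0))) (rpredZ c3 (h i1 n.+2))).
Qed.

Lemma ev_pw (X : 'rV[k]_4) j m : ev (lf j ^+ m) X = (X *m N) 0 j ^+ m.
Proof. by rewrite ev_pow ev_lf. Qed.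
Lemma ev_mp (X : 'rV[k]_4) a b m : ev (lf a * lf b ^+ m) X = (X *m N) 0 a * (X *m N) 0 b ^+ m.
Proof. by rewrite evM ev_pw ev_lf. Qed.
Lemma ev_sc (X : 'rV[k]_4) c (p : {mpoly k[4]}) : ev (c *: p) X = c * ev p X.
Proof. exact: evZ. Qed.
Lemma evd_pw (X : 'rV[k]_4) l j m : ev (mderiv l (lf j ^+ m.+1)) X = m.+1%:R * (X *m N) 0 j ^+ m * N l j.
Proof. by rewrite ev_d_pow ev_lf ev_lfd. Qed.
Lemma evd_mp (X : 'rV[k]_4) l a b m : ev (mderiv l (lf a * lf b ^+ m.+1)) X =
  N l a * (X *m N) 0 b ^+ m.+1 + (X *m N) 0 a * (m.+1%:R * (X *m N) 0 b ^+ m * N l b).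
Proof. by rewrite ev_d_mul evd_pw ev_lfd ev_pw ev_lf. Qed.
Lemma evd_sc (X : 'rV[k]_4) l c (p : {mpoly k[4]}) : ev (mderiv l (c *: p)) X = c * ev (mderiv l p) X.
Proof. by rewrite mderivZ evZ. Qed.

Lemma ev_Fp (X : 'rV[k]_4) : let y := X *m N in
  ev Fp X = Phi c1 c2 c3 n (y 0 i0) (y 0 i1) (y 0 i2) (y 0 i3).
Proof.
rewrite /= /Fp /Phi !evD; congr (_ + _ + _ + _ + _).
- exact: ev_pw.
- exact: ev_mp.
- by rewrite ev_sc ev_mp.
- by rewrite ev_sc ev_mp.
- by rewrite ev_sc ev_pw.
Qed.

Lemma ev_dFp (X : 'rV[k]_4) l : let y := X *m N in
  ev (mderiv l Fp) X =
    P0 c1 c2 c3 n (y 0 i0) (y 0 i1) (y 0 i2) (y 0 i3) * N l i0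
  + P1 c1 c2 c3 n (y 0 i0) (y 0 i1) (y 0 i2) (y 0 i3) * N l i1
  + P2 c1 c2 c3 n (y 0 i0) (y 0 i1) (y 0 i2) (y 0 i3) * N l i2
  + P3 c1 c2 c3 n (y 0 i0) (y 0 i1) (y 0 i2) (y 0 i3) * N l i3.
Proof.
rewrite /= /Fp !mderivD !evD.
set y0 := (X *m N) 0 i0; set y1 := (X *m N) 0 i1; set y2 := (X *m N) 0 i2; set y3 := (X *m N) 0 i3.
transitivity ((n.+2%:R * y3 ^+ n.+1 * N l i3)
   + (N l i2 * y0 ^+ n.+1 + y2 * (n.+1%:R * y0 ^+ n * N l i0))
   + c1 * (N l i2 * y3 ^+ n.+1 + y2 * (n.+1%:R * y3 ^+ n * N l i3))
   + c2 * (N l i1 * y0 ^+ n.+1 + y1 * (n.+1%:R * y0 ^+ n * N l i0))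
   + c3 * (n.+2%:R * y1 ^+ n.+1 * N l i1)).
  congr (_ + _ + _ + _ + _).
  - exact: evd_pw.
  - exact: evd_mp.
  - by rewrite evd_sc evd_mp.
  - by rewrite evd_sc evd_mp.
  - by rewrite evd_sc evd_pw.
rewrite /P0 /P1 /P2 /P3; ring.
Qed.
End Poly.
Local Transparent mpoly_mul mpoly_scale mpoly_add GRing.exp.

Ltac simp := rewrite ?(mul0r, mulr0, add0r, addr0, mul1r, mulr1, z0, expr0) //.

Section Frame.
Variable k : closedFieldType.
Variable A : 'M[k]_4.
Variables vr qr : 'rV[k]_4.
Hypothesis Hv0 : vr != 0.
Hypothesis Hsing : forall x : 'rV[k]_4, x != 0 -> qm A x = 0 -> (A + A^T) *m x^T = 0 -> exists c, x = c *: vr.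
Hypothesis Hvq : qm A vr = 0.
Hypothesis Hvg : (A + A^T) *m vr^T = 0.
Hypothesis Hq0 : qr != 0.
Hypothesis Hqq : qm A qr = 0.
Hypothesis Hqv : forall c, qr != c *: vr.

Local Notation qm := (qm A).
Local Notation bm := (bm A).

Lemma bm_grad x y : bm x y = (y *m ((A + A^T) *m x^T)) 0 0.
Proof. by rewrite /bm mulmxA. Qed.

Lemma e_entry (l i : 'I_4) : (delta_mx 0 l : 'rV[k]_4) 0 i = (i == l)%:R.
Proof. by rewrite mxE eqxx. Qed.

Lemma gradE x l : ((A + A^T) *m x^T) l 0 = bm x (delta_mx 0 l).
Proof.
rewrite bm_grad [RHS]mxE (bigD1 l) //= big1 ?addr0; last by move=> i hi; rewrite e_entry (negbTE hi) mul0r.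
by rewrite e_entry eqxx mul1r.
Qed.

Lemma grad0 x : (forall y, bm x y = 0) -> (A + A^T) *m x^T = 0.
Proof. by move=> h; apply/matrixP => l j; rewrite (ord1 j) gradE h mxE. Qed.

Lemma bmv x : bm vr x = 0.
Proof. by rewrite bm_grad Hvg mulmx0 mxE. Qed.
Lemma bmv' x : bm x vr = 0.
Proof. by rewrite bmC bmv. Qed.

Lemma bmBl r1 r2 s : bm (r1 - r2) s = bm r1 s - bm r2 s.
Proof. by rewrite -scaleN1r bmDl bmZl mulN1r. Qed.
Lemma bmBr r s1 s2 : bm r (s1 - s2) = bm r s1 - bm r s2.
Proof. by rewrite -scaleN1r bmDr bmZr mulN1r. Qed.
Lemma qmB r s : qm (r - s) = qm r + qm s - bm r s.
Proof. by rewrite -scaleN1r qmD qmZ bmZr; ring. Qed.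

Lemma bmqq : bm qr qr = 0.
Proof. by rewrite bm_diag Hqq mulr0. Qed.

Lemma exists_r : exists rr, qm rr = 0 /\ bm qr rr = 1.
Proof.
have gn : (A + A^T) *m qr^T != 0.
  apply/eqP => g0; have [c hc] := Hsing Hq0 Hqq g0.
  by move: (Hqv c); rewrite hc eqxx.
have [l [j hl]] : exists l j, ((A + A^T) *m qr^T) l j != 0 by apply/matrix0Pn.
move: hl; rewrite (ord1 j) gradE => hl.
pose r0 := (bm qr (delta_mx 0 l))^-1 *: (delta_mx 0 l : 'rV[k]_4).
have h1 : bm qr r0 = 1 by rewrite bmZr mulVf.
exists (r0 - qm r0 *: qr); split.
  by rewrite qmB qmZ Hqq bmZr bmC h1; ring.
by rewrite bmBr bmZr bmqq h1; ring.
Qed.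


Lemma projW rr z : qm rr = 0 -> bm qr rr = 1 ->
  let z2 := z - bm rr z *: qr - bm qr z *: rr in
  [/\ bm qr z2 = 0, bm rr z2 = 0 & z = z2 + bm qr z *: rr + bm rr z *: qr].
Proof.
move=> hrr hqr /=; split.
- by rewrite !bmBr !bmZr bmqq hqr; ring.
- by rewrite !bmBr !bmZr (bmC A rr qr) hqr bm_diag hrr; ring.
- by rewrite !subrK.
Qed.


Lemma sqrt_exists (a : k) : exists l : k, l ^+ 2 = a.
Proof.
have [x hx] := @solve_monicpoly k 2 (fun i => if i == 0%N then a else 0) isT.
by exists x; rewrite hx big_ord_recl big_ord1 /= expr0 mulr1 mul0r addr0.
Qed.

Lemma exists_w rr : qm rr = 0 -> bm qr rr = 1 ->
  exists ww, [/\ bm qr ww = 0, bm rr ww = 0 & qm ww = 1].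
Proof.
move=> hrr hqr.
have [w0 [h1 h2 h3]] : exists w0, [/\ bm qr w0 = 0, bm rr w0 = 0 & qm w0 != 0].
  apply: NNPP => NE.
  have HW : forall x, bm qr x = 0 -> bm rr x = 0 -> qm x = 0.
    move=> x h1 h2; case: (eqVneq (qm x) 0) => // hx; exfalso; apply: NE; by exists x; split.
  have Hz : forall x, bm qr x = 0 -> bm rr x = 0 -> forall z, bm x z = 0.
    move=> x h1 h2 z.
    have [hz1 hz2 hz] := projW z hrr hqr.
    set z2 := z - bm rr z *: qr - bm qr z *: rr in hz1 hz2 hz.
    have := HW (x + z2); rewrite (bmDr A qr x z2) (bmDr A rr x z2) h1 h2 hz1 hz2 addr0 => /(_ erefl erefl).
    rewrite qmD (HW x h1 h2) (HW z2 hz1 hz2) !add0r => hxz.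
    by rewrite {1}hz (bmDr A x (z2 + _) _) (bmDr A x z2 _) !bmZr hxz (bmC A x rr) (bmC A x qr) h1 h2; ring.
  pose N3 : 'M[k]_(3, 4) := \matrix_(i < 3) nth 0 [:: qr; rr; vr] i.
  have hsub : (1%:M <= N3)%MS.
    apply/row_subP => l; rewrite row1.
    have [hz1 hz2 hz] := projW (delta_mx 0 l) hrr hqr.
    set z2 := _ - _ - _ in hz1 hz2 hz.
    have [c hc] : exists c, z2 = c *: vr.
      case: (eqVneq z2 0) => [->|nz]; first by exists 0; rewrite scale0r.
      apply: Hsing => //; first exact: HW.
      by apply: grad0; apply: Hz.
    rewrite hz hc; apply: addmx_sub; first apply: addmx_sub; apply: scalemx_sub.
    - by have := row_sub (2 : 'I_3) N3; rewrite rowK.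
    - by have := row_sub (1 : 'I_3) N3; rewrite rowK.
    - by have := row_sub (0 : 'I_3) N3; rewrite rowK.
  have := mxrankS hsub; rewrite mxrank1 => h.
  by have := leq_trans h (rank_leq_row N3).
have [l hl] := sqrt_exists (qm w0).
have ln : l != 0 by apply: contraNneq h3 => l0; rewrite -hl l0 expr0n.
exists (l^-1 *: w0); split.
- by rewrite bmZr h1 mulr0.
- by rewrite bmZr h2 mulr0.
- by rewrite qmZ -hl exprVn mulVf // expf_neq0.
Qed.

Variables rr ww : 'rV[k]_4.
Hypothesis Hrr : qm rr = 0.
Hypothesis Hqr : bm qr rr = 1.
Hypothesis Hwq : bm qr ww = 0.
Hypothesis Hwr : bm rr ww = 0.
Hypothesis Hww : qm ww = 1.

Definition fr (i : 'I_4) : 'rV[k]_4 := nth 0 [:: qr + vr; rr; ww; vr] i.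
Definition M : 'M[k]_4 := \matrix_(i < 4) fr i.

Lemma yM y : y *m M = y 0 i0 *: (qr + vr) + y 0 i1 *: rr + y 0 i2 *: ww + y 0 i3 *: vr.
Proof. by rewrite mulmx_sum_row sum4 /M !rowK. Qed.

Lemma bm_rr : bm rr rr = 0. Proof. by rewrite bm_diag Hrr mulr0. Qed.
Lemma bm_ww : bm ww ww = 2%:R. Proof. by rewrite bm_diag Hww mulr1. Qed.
Lemma bm_rq : bm rr qr = 1. Proof. by rewrite bmC Hqr. Qed.
Lemma bm_wq : bm ww qr = 0. Proof. by rewrite bmC Hwq. Qed.
Lemma bm_wr : bm ww rr = 0. Proof. by rewrite bmC Hwr. Qed.

Ltac bmsimp := rewrite ?(bmDl, bmZl, bmDr, bmZr, bmv, bmv', bm_rr, bm_ww, bm_rq, bm_wq, bm_wr, Hqr, Hwq, Hwr, bmqq).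

Lemma g_q y : bm (y *m M) (qr + vr) = y 0 i1.
Proof. rewrite yM; bmsimp; ring. Qed.
Lemma g_r y : bm (y *m M) rr = y 0 i0.
Proof. rewrite yM; bmsimp; ring. Qed.
Lemma g_w y : bm (y *m M) ww = 2%:R * y 0 i2.
Proof. rewrite yM; bmsimp; ring. Qed.
Lemma g_v y : bm (y *m M) vr = 0.
Proof. by rewrite bmv'. Qed.
Lemma q_y y : qm (y *m M) = y 0 i0 * y 0 i1 + y 0 i2 ^+ 2.
Proof. rewrite yM !qmD !qmZ ?qmD ?Hqq ?Hvq ?Hrr ?Hww; bmsimp; ring. Qed.

Lemma qm0 : qm 0 = 0.
Proof. by rewrite /qm !mul0mx mxE. Qed.

Lemma row4 (y : 'rV[k]_4) : y 0 i0 = 0 -> y 0 i1 = 0 -> y 0 i2 = 0 -> y 0 i3 = 0 -> y = 0.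
Proof.
move=> h0 h1 h2 h3; apply/rowP; apply: ord4P; by rewrite mxE.
Qed.

Lemma M_unit : M \in unitmx.
Proof.
rewrite -row_free_unit; apply: inj_row_free => y hy.
have e0 : y 0 i0 = 0 by rewrite -(g_r y) hy bm0l.
have e1 : y 0 i1 = 0 by rewrite -(g_q y) hy bm0l.
have e2 : y 0 i2 = 0.
  by apply: sq0; have := q_y y; rewrite hy qm0 e0 mul0r add0r => <-.
have e3 : y 0 i3 = 0.
  move: hy; rewrite yM e0 e1 e2 !scale0r !add0r => /eqP; rewrite scaler_eq0 (negbTE Hv0) orbF.
  by move/eqP.
exact: row4.
Qed.

Definition Ninv := invmx M.

Lemma sum_test (f : 'I_4 -> k) (a0 a1 a2 a3 : k) :
  (forall l, f l = a0 * Ninv l i0 + a1 * Ninv l i1 + a2 * Ninv l i2 + a3 * Ninv l i3) ->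
  forall m, \sum_(l < 4) M m l * f l =
    a0 * (m == i0)%:R + a1 * (m == i1)%:R + a2 * (m == i2)%:R + a3 * (m == i3)%:R.
Proof.
move=> hf m.
have hMN : forall j, \sum_(l < 4) M m l * Ninv l j = (m == j)%:R.
  by move=> j; have := congr1 (fun B : 'M[k]_4 => B m j) (mulmxV M_unit); rewrite !mxE.
rewrite (eq_bigr (fun l => a0 * (M m l * Ninv l i0) + a1 * (M m l * Ninv l i1)
   + a2 * (M m l * Ninv l i2) + a3 * (M m l * Ninv l i3))); last by move=> l _; rewrite hf; ring.
by rewrite !big_split /= -!mulr_sumr !hMN.
Qed.


Lemma Mentry m l : M m l = fr m 0 l.
Proof. by rewrite /M mxE. Qed.

Lemma smooth_row c1 c2 c3 n : core_concl c1 c2 c3 n ->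
  forall X : 'rV[k]_4, X != 0 -> qm X = 0 -> ev (Fp Ninv c1 c2 c3 n) X = 0 ->
  forall s t, (forall l, s * ((A + A^T) *m X^T) l 0 + t * ev (mderiv l (Fp Ninv c1 c2 c3 n)) X = 0) ->
  s = 0 /\ t = 0.
Proof.
move=> hcore X Xn hq hF s t hst.
pose y := X *m Ninv.
have hX : X = y *m M by rewrite /y mulmxKV ?M_unit.
pose Y0 := y 0 i0; pose Y1 := y 0 i1; pose Y2 := y 0 i2; pose Y3 := y 0 i3.
have key : forall m, s * bm X (fr m) +
   t * (P0 c1 c2 c3 n Y0 Y1 Y2 Y3 * (m == i0)%:R + P1 c1 c2 c3 n Y0 Y1 Y2 Y3 * (m == i1)%:R
      + P2 c1 c2 c3 n Y0 Y1 Y2 Y3 * (m == i2)%:R + P3 c1 c2 c3 n Y0 Y1 Y2 Y3 * (m == i3)%:R) = 0.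
  move=> m.
  rewrite -(@sum_test (fun l => ev (mderiv l (Fp Ninv c1 c2 c3 n)) X)); last first.
    by move=> l; rewrite ev_dFp.
  rewrite bm_grad mxE mulr_sumr mulr_sumr -big_split /= big1 // => l _.
  by rewrite Mentry -(mulr0 (fr m 0 l)) -(hst l); ring.
apply: (hcore Y0 Y1 Y2 Y3 s t).
- move=> [h0 [h1 [h2 h3]]]; move/eqP: Xn; apply.
  by rewrite hX (row4 h0 h1 h2 h3) mul0mx.
- by rewrite -q_y -hX.
- by rewrite -hF (ev_Fp Ninv c1 c2 c3 n X).
- by have := key i0; rewrite /= hX g_q; simp.
- by have := key i1; rewrite /= hX g_r; simp.
- by have := key i2; rewrite /= hX g_w; simp.
- by have := key i3; rewrite /= hX g_v; simp.
Qed.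


Lemma v_coord : vr *m Ninv = delta_mx 0 i3.
Proof.
have -> : vr = delta_mx 0 i3 *m M by rewrite -rowE /M rowK.
by rewrite mulmxK // M_unit.
Qed.

Lemma qv_coord : (qr + vr) *m Ninv = delta_mx 0 i0.
Proof.
have -> : qr + vr = delta_mx 0 i0 *m M by rewrite -rowE /M rowK.
by rewrite mulmxK // M_unit.
Qed.

Lemma comb_coord a b : (a *: vr + b *: qr) *m Ninv = b *: delta_mx 0 i0 + (a - b) *: delta_mx 0 i3.
Proof.
have -> : a *: vr + b *: qr = b *: (qr + vr) + (a - b) *: vr.
  by apply/rowP => j; rewrite !mxE; ring.
by rewrite mulmxDl -!scalemxAl qv_coord v_coord.
Qed.

Lemma Phi_axis (c1 c2 c3 : k) n (y0 y3 : k) : Phi c1 c2 c3 n y0 0 0 y3 = y3 ^+ n.+2.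
Proof. by rewrite /Phi; simp. Qed.

Lemma ev_comb (c1 c2 c3 : k) n (a b : k) : ev (Fp Ninv c1 c2 c3 n) (a *: vr + b *: qr) = (a - b) ^+ n.+2.
Proof.
rewrite ev_Fp comb_coord !mxE /=; simp.
exact: Phi_axis.
Qed.

Lemma main_row n : exists F : {mpoly k[4]}, [/\ F \is n.+2.-homog,
   (forall X, X != 0 -> qm X = 0 -> ev F X = 0 -> forall s t,
      (forall l, s * ((A + A^T) *m X^T) l 0 + t * ev (mderiv l F) X = 0) -> s = 0 /\ t = 0) &
   (forall a b, ev F (a *: vr + b *: qr) = (a - b) ^+ n.+2)].
Proof.
have [c1 [c2 [c3 hc]]] : exists c1 c2 c3 : k, core_concl c1 c2 c3 n.
  case: (eqVneq (n.+2%:R : k) 0) => hd.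
    by exists 1, 0, 1; apply: coreI.
  case: (classic (@Bad k n 1)) => hb.
    exists 0, 1, (-1); apply: coreII => //; first by rewrite oppr_eq0 oner_eq0.
    by move=> hb'; apply: (@notbad k n); split.
  by exists 0, 1, 1; apply: coreII => //; exact: oner_neq0.
exists (Fp Ninv c1 c2 c3 n); split.
- exact: Fp_homog.
- exact: smooth_row.
- exact: ev_comb.
Qed.
End Frame.

Section Final.
Variable k : closedFieldType.

Definition rv (x : 'I_4 -> k) : 'rV[k]_4 := \row_i x i.

Lemma ev_fun (p : {mpoly k[4]}) (x : 'I_4 -> k) : p.@[x] = ev p (rv x).
Proof. by rewrite /ev; apply: meval_eq => i; rewrite mxE. Qed.

Lemma rv_nz x : vnonzero x <-> rv x != 0.
Proof.
split.
  move=> [i hi]; apply/eqP => h; move: hi.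
  have : rv x 0 i = x i by rewrite mxE.
  by rewrite h mxE => <-; rewrite eqxx.
move=> h; apply: Classical_Prop.NNPP => hn; move/eqP: h; apply; apply/rowP => i; rewrite !mxE.
by apply/eqP; apply: contraT => hi; exfalso; apply: hn; exists i.
Qed.

Lemma rvK (X : 'rV[k]_4) : rv (fun i => X 0 i) = X.
Proof. by apply/rowP => i; rewrite mxE. Qed.

Lemma rv_comb (a b : k) (x y : 'I_4 -> k) : rv (fun i => a * x i + b * y i) = a *: rv x + b *: rv y.
Proof. by apply/rowP => i; rewrite !mxE. Qed.

End Final.

Unset Implicit Arguments.

Theorem theorem4p6 (k : closedFieldType) (Q : {mpoly k[4]}) (v q : 'I_4 -> k)
    (d : nat) :
  quadric_cone Q v -> (2 <= d)%N ->
  on_hyp Q q -> ~ proj_eq q v ->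
  exists F : {mpoly k[4]},
    [/\ F \is d.-homog,
        smooth_section Q F,
        F.@[v] != 0,
        F.@[q] != 0 &
        exists p, [/\ on_line v q p, F.@[p] = 0 &
          forall p', on_line v q p' -> F.@[p'] = 0 -> proj_eq p' p]].
Proof.
move=> [hom [vnz hcone]] hd [qnz hq0] hqv.
have [A hA] := rep2 hom; subst Q.
have Qf : forall x, (quadp A).@[x] = qm A (rv x) by move=> x; rewrite ev_fun ev_quadp.
have Gf : forall x i, grad (quadp A) x i = ((A + A^T) *m (rv x)^T) i 0.
  by move=> x i; rewrite /grad ev_fun ev_dquadp.
have Hv0 : rv v != 0 by apply/rv_nz.
have [Hvq Hvg] : qm A (rv v) = 0 /\ (A + A^T) *m (rv v)^T = 0.
  have [h1 h2] := proj2 (hcone v vnz) (ex_intro _ 1 (conj (oner_neq0 k) (fun i => esym (mul1r (v i))))).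
  split; first by rewrite -Qf.
  by apply/matrixP => i j; rewrite (ord1 j) -Gf h2 mxE.
have Hsing : forall x : 'rV[k]_4, x != 0 -> qm A x = 0 -> (A + A^T) *m x^T = 0 -> exists c, x = c *: rv v.
  move=> x xn hx hg.
  have xfn : vnonzero (fun i => x 0 i) by apply/rv_nz; rewrite rvK.
  have h1 : (quadp A).@[fun i => x 0 i] = 0 by rewrite Qf rvK.
  have h2 : forall i, grad (quadp A) (fun i => x 0 i) i = 0 by move=> i; rewrite Gf rvK hg mxE.
  have [c [_ hc]] := proj1 (hcone _ xfn) (conj h1 h2).
  by exists c; apply/rowP => i; rewrite !mxE hc.
have Hq0 : rv q != 0 by apply/rv_nz.
have Hqq : qm A (rv q) = 0 by rewrite -Qf.
have Hqv : forall c, rv q != c *: rv v.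
  move=> c; apply/eqP => hc; case: (eqVneq c 0) => [c0|cn].
    by move: Hq0; rewrite hc c0 scale0r eqxx.
  apply: hqv; exists c; split => // i.
  by have := congr1 (fun X : 'rV[k]_4 => X 0 i) hc; rewrite /= !mxE.
have [rr [Hrr Hqr]] := exists_r Hsing Hq0 Hqq Hqv.
have [ww [Hwq Hwr Hww]] := exists_w Hsing Hqq Hrr Hqr.
have hdn : d = (d - 2).+2 by rewrite -addn2 subnK.
have [F [Fh Fs Fc]] := main_row Hv0 Hvq Hvg Hqq Hrr Hqr Hwq Hwr Hww (d - 2).
have Fv : forall a b : k, F.@[fun i => a * v i + b * q i] = (a - b) ^+ (d - 2).+2.
  by move=> a b; rewrite ev_fun rv_comb Fc.
exists F; split.
- by rewrite hdn.
- move=> x xn hx hF s t hst; apply: (Fs (rv x)).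
  + by apply/rv_nz.
  + by rewrite -Qf.
  + by rewrite -ev_fun.
  + by move=> l; rewrite -Gf -ev_fun; apply: hst.
- have -> : F.@[v] = F.@[fun i => 1 * v i + 0 * q i] by apply: meval_eq => i; rewrite mul1r mul0r addr0.
  by rewrite Fv subr0 expr1n oner_neq0.
- have -> : F.@[q] = F.@[fun i => 0 * v i + 1 * q i] by apply: meval_eq => i; rewrite mul1r mul0r add0r.
  by rewrite Fv sub0r expf_neq0 // oppr_eq0 oner_neq0.
exists (fun i => 1 * v i + 1 * q i); split.
- split; last by exists 1, 1.
  apply/rv_nz; rewrite rv_comb !scale1r; apply/negP => /eqP h.
  have := Hqv (-1); rewrite scaleN1r; move/eqP: h; rewrite addrC addr_eq0 => /eqP ->.
  by rewrite eqxx.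
- by rewrite Fv subrr expr0n.
move=> p' [p'n [a [b hp]]] hp'.
have ep : F.@[p'] = F.@[fun i => a * v i + b * q i] by apply: meval_eq.
move: hp'; rewrite ep Fv => /eqP; rewrite expf_eq0 /= subr_eq0 => /eqP hab.
subst b.
exists a; split.
  apply/eqP => a0; case: p'n => i; by rewrite hp a0 !mul0r addr0 eqxx.
by move=> i; rewrite hp; ring.
Qed.
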